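(* Write $\dfrac{(q;q)_\infty^4}{(q^2;q^2)_\infty^2(q^4;q^4)_\infty}=\sum_{n\ge0}a_nq^n$. Then for all $n\ge0$: $a_n>0$ if $n\equiv0,2\pmod4$, $a_n<0$ if $n\equiv1\pmod4$, and $a_n=0$ if $n\equiv3\pmod4$.
   Context: For $|q|<1$, $(a;q)_\infty=\prod_{k\ge0}(1-aq^k)$. *)

(* Defs.v *)
(* Formal power series in q with integer coefficients,
   handled through truncations by polynomials in {poly int}. *)
From mathcomp Require Import all_boot all_order all_algebra.
Set Implicit Arguments. Unset Strict Implicit. Unset Printing Implicit Defensive.
Import Order.TTheory GRing.Theory Num.Theory.
Local Open Scope ring_scope.

(* Truncation of (q^j;q^j)_oo = prod_{k>=0} (1 - q^{j(k+1)}) keeping the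
   factors k+1 = 1..N; for j >= 1 it agrees with the infinite product in
   all coefficients of degree <= N. *)
Definition poch_trunc (j N : nat) : {poly int} :=
  \prod_(1 <= k < N.+1) (1 - 'X^(k * j)).

(* Truncation of 1/(q^j;q^j)_oo = prod_{k>=1} sum_{i>=0} q^{ijk}; for j >= 1
   it agrees with the formal power series in all coefficients of degree <= N. *)
Definition inv_poch_trunc (j N : nat) : {poly int} :=
  \prod_(1 <= k < N.+1) \sum_(0 <= i < N.+1) 'X^(i * k * j).

Definition a_coef (n : nat) : int :=
  ((poch_trunc 1 n) ^+ 4 * (inv_poch_trunc 2 n) ^+ 2 * inv_poch_trunc 4 n)`_n.

(* Main.v *)
Require Import Defs.
From mathcomp Require Import all_boot all_order all_algebra.
From mathcomp Require Import zify ring lra.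
Import Order.TTheory GRing.Theory Num.Theory.
Local Open Scope ring_scope.
Set Implicit Arguments. Unset Strict Implicit.

Definition eqm (n : nat) (p q : {poly int}) := forall i, (i <= n)%N -> p`_i = q`_i.

Lemma eqm_refl n p : eqm n p p. Proof. by []. Qed.
Lemma eqm_sym n p q : eqm n p q -> eqm n q p. Proof. by move=> h i hi; rewrite h. Qed.
Lemma eqm_trans n p q r : eqm n p q -> eqm n q r -> eqm n p r.
Proof. by move=> h1 h2 i hi; rewrite h1 // h2. Qed.
Lemma eqm_add n p q p' q' : eqm n p p' -> eqm n q q' -> eqm n (p + q) (p' + q').
Proof. by move=> h1 h2 i hi; rewrite !coefD h1 // h2. Qed.
Lemma eqm_mul n p q p' q' : eqm n p p' -> eqm n q q' -> eqm n (p * q) (p' * q').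
Proof.
move=> h1 h2 i hi; rewrite !coefM; apply: eq_bigr => j _.
rewrite h1 ?h2 //; [lia| have := ltn_ord j; lia].
Qed.
Lemma eqm_sum n (I : Type) (r : seq I) (P : pred I) (F G : I -> {poly int}) :
  (forall i, P i -> eqm n (F i) (G i)) -> eqm n (\sum_(i <- r | P i) F i) (\sum_(i <- r | P i) G i).
Proof.
move=> h; elim/big_rec2: _ => [|i x y Pi e]; first exact: eqm_refl.
exact: eqm_add (h _ Pi) e.
Qed.
Lemma eqm_prod n (I : Type) (r : seq I) (P : pred I) (F G : I -> {poly int}) :
  (forall i, P i -> eqm n (F i) (G i)) -> eqm n (\prod_(i <- r | P i) F i) (\prod_(i <- r | P i) G i).
Proof.
move=> h; elim/big_rec2: _ => [|i x y Pi e]; first exact: eqm_refl.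
exact: eqm_mul (h _ Pi) e.
Qed.
Lemma eqm_Xn n k p : (n < k)%N -> eqm n ('X^k * p) 0.
Proof. by move=> h i hi; rewrite coefXnM coef0 ifT //; lia. Qed.
Lemma eqm_1X n k : (n < k)%N -> eqm n (1 - 'X^k) 1.
Proof.
move=> h i hi; rewrite coefB coefXn.
have -> : (i == k) = false by apply/eqP; lia.
by rewrite subr0.
Qed.
Lemma eqm_prod1 n (I : Type) (r : seq I) (P : pred I) (F : I -> {poly int}) :
  (forall i, P i -> eqm n (F i) 1) -> eqm n (\prod_(i <- r | P i) F i) 1.
Proof.
move=> h; elim/big_rec: _ => [|i x Pi e]; first exact: eqm_refl.
by rewrite -[1]mulr1; apply: eqm_mul (h _ Pi) e.
Qed.

Lemma inv_poch_ok j n : (0 < j)%N -> eqm n (inv_poch_trunc j n * poch_trunc j n) 1.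
Proof.
move=> j0; rewrite /inv_poch_trunc /poch_trunc -big_split /= big_nat_cond.
apply: eqm_prod1 => k /andP[/andP[k1 _] _].
have -> : \sum_(0 <= i < n.+1) ('X^(i * k * j) : {poly int}) = \sum_(i < n.+1) ('X^(k*j))^+i.
  by rewrite big_mkord; apply: eq_bigr => i _; rewrite -exprM; congr ('X^_); lia.
have e : (\sum_(i < n.+1) ('X^(k*j) : {poly int})^+i) * (1 - 'X^(k*j)) = 1 - ('X^(k*j))^+n.+1.
  by rewrite -[1 - ('X^(k*j))^+n.+1]opprB subrX1 mulrC -mulNr opprB.
rewrite e -exprM; apply: eqm_1X.
have : (1 <= k * j)%N by rewrite muln_gt0; apply/andP; split => //; lia.
nia.
Qed.

Lemma poch_stable j n M : (0 < j)%N -> (n <= M)%N -> eqm n (poch_trunc j M) (poch_trunc j n).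
Proof.
move=> j0; elim: M => [|M IH] hM.
  by have -> : n = 0%N by lia.
case: (ltnP n M.+1) => h; last by have -> : n = M.+1 by lia.
have -> : poch_trunc j M.+1 = poch_trunc j M * (1 - 'X^(M.+1 * j)).
  by rewrite /poch_trunc big_nat_recr.
rewrite -[poch_trunc j n]mulr1.
apply: eqm_mul; first exact: IH.
apply: eqm_1X; nia.
Qed.
Fixpoint qb (m k : nat) {struct m} : {poly int} :=
  match k with
  | 0 => 1
  | k'.+1 => match m with 0 => 0 | m'.+1 => qb m' k' + 'X^(k'.+1 * 2) * qb m' k'.+1 end
  end.

Lemma pcS j m : poch_trunc j m.+1 = poch_trunc j m * (1 - 'X^(m.+1 * j)).
Proof. by rewrite /poch_trunc big_nat_recr. Qed.
Lemma pc0 j : poch_trunc j 0 = 1.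
Proof. by rewrite /poch_trunc big_geq. Qed.

Lemma qb_gt m k : (m < k)%N -> qb m k = 0.
Proof.
elim: m k => [|m IH] [|k] //= h.
by rewrite !IH ?mulr0 ?addr0 //; lia.
Qed.
Lemma qb0 m : qb m 0 = 1. Proof. by case: m. Qed.

Lemma qb_prod m k : (k <= m)%N -> qb m k * poch_trunc 2 k * poch_trunc 2 (m - k) = poch_trunc 2 m.
Proof.
elim: m k => [|m IH] [|k] h //=.
- by rewrite pc0 !mulr1.
- by rewrite pc0 !mul1r subn0.
rewrite subSS mulrDl mulrDl.
have e1 : qb m k * poch_trunc 2 k.+1 * poch_trunc 2 (m - k) = poch_trunc 2 m * (1 - 'X^(k.+1 * 2)).
  rewrite pcS -(IH k); [ring | lia].
rewrite e1 (pcS 2 m).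
case: (ltnP k m) => hk.
  have e2 : qb m k.+1 * poch_trunc 2 k.+1 * poch_trunc 2 (m - k) = poch_trunc 2 m * (1 - 'X^((m-k) * 2)).
    have -> : (m - k = (m - k.+1).+1)%N by lia.
    by rewrite (pcS 2 (m - k.+1)) !mulrA (IH k.+1 hk).
  have -> : 'X^(k.+1 * 2) * qb m k.+1 * poch_trunc 2 k.+1 * poch_trunc 2 (m - k) = 'X^(k.+1 * 2) * (qb m k.+1 * poch_trunc 2 k.+1 * poch_trunc 2 (m - k)) by ring.
  rewrite e2.
  have -> : ('X^(m.+1*2) : {poly int}) = 'X^(k.+1*2) * 'X^((m-k)*2) by rewrite -exprD; congr ('X^_); lia.
  ring.
have -> : k = m by lia.
by rewrite qb_gt // mulr0 mul0r mul0r addr0.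
Qed.



Lemma pc_neq0 j k : (0 < j)%N -> poch_trunc j k != 0.
Proof.
move=> j0.
suff : (poch_trunc j k)`_0 = 1 by move=> h; apply/eqP => e; rewrite e coef0 in h.
elim: k => [|k IH]; first by rewrite pc0 coef1.
rewrite pcS coef0M IH mul1r coefB coef1 coefXn.
have -> : (0 == k.+1 * j)%N = false by apply/eqP; nia.
by rewrite subr0.
Qed.

Lemma qb_id m : qb m m = 1.
Proof. by elim: m => //= m ->; rewrite qb_gt // mulr0 addr0. Qed.

Lemma ruleB m k : qb m.+1 k.+1 = 'X^((m-k)*2) * qb m k + qb m k.+1.
Proof.
case: (ltngtP k m) => h.
- apply: (mulIf (pc_neq0 (k.+1) (isT : (0 < 2)%N))) .
  apply: (mulIf (pc_neq0 (m - k) (isT : (0 < 2)%N))).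
  rewrite -mulrA [X in X = _](_ : _ = qb m.+1 k.+1 * poch_trunc 2 k.+1 * poch_trunc 2 (m.+1 - k.+1)) ?mulrA //.
  rewrite qb_prod; last by lia.
  have h1 := qb_prod (ltnW h).
  have h2 := qb_prod h.
  have em : (m - k = (m - k.+1).+1)%N by lia.
  rewrite em pcS -em in h1.
  rewrite (pcS 2 k) in h2.
  rewrite (pcS 2 m) (pcS 2 k) em pcS -em.
  set a := qb m k in h1 *; set b := qb m k.+1 in h2 *.
  set P := poch_trunc 2 k in h1 h2 *; set Q := poch_trunc 2 (m - k.+1) in h1 h2 *.
  set x := ('X^(k.+1 * 2) : {poly int}) in h1 h2 *.
  set y := ('X^((m-k) * 2) : {poly int}) in h1 h2 *.
  have -> : ('X^(m.+1 * 2) : {poly int}) = x * y by rewrite -exprD; congr ('X^_); lia.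
  transitivity (y * (a * P * (Q * (1 - y))) * (1 - x) + (b * (P * (1 - x)) * Q) * (1 - y)); last by ring.
  rewrite h1 h2; ring.
- by rewrite !qb_gt ?mulr0 ?addr0 //; lia.
- by rewrite h !qb_id subnn mul1r qb_gt // addr0.
Qed.

Lemma rule3 m j : qb m.+2 j.+2 = 'X^((m-j)*2) * qb m j + (1 + 'X^(m.+1*2)) * qb m j.+1 + 'X^(j.+2*2) * qb m j.+2.
Proof.
have -> : qb m.+2 j.+2 = qb m.+1 j.+1 + 'X^(j.+2 * 2) * qb m.+1 j.+2 by [].
rewrite (ruleB m j) (ruleB m j.+1).
case: (ltnP j m) => h.
  have -> : ('X^(m.+1 * 2) : {poly int}) = 'X^(j.+2 * 2) * 'X^((m - j.+1) * 2) by rewrite -exprD; congr ('X^_); lia.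
  ring.
rewrite (qb_gt (m := m) (k := j.+1)) //; ring.
Qed.

Lemma rule3' m : qb m.+2 1 = 'X^2 * qb m 1 + (1 + 'X^(m.+1*2)).
Proof.
have -> : qb m.+2 1 = qb m.+1 0 + 'X^(1 * 2) * qb m.+1 1 by [].
rewrite (ruleB m 0) !qb0 subn0.
have -> : ('X^(m.+1 * 2) : {poly int}) = 'X^(1 * 2) * 'X^(m * 2) by rewrite -exprD; congr ('X^_); lia.
ring.
Qed.

Definition Ai (i : nat) : {poly int} := 'X^(i.*2.+1).
Definition Fx (i : nat) : {poly {poly int}} := (Ai i)%:P + (1 + Ai i ^+ 2)%:P * 'X + (Ai i)%:P * 'X^2.
Definition gp (n : nat) := \prod_(i < n) Fx i.
Definition ex (n j : nat) : nat := ((j - n) * (j - n) + (n - j) * (n - j))%N.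
Definition cf (n j : nat) : {poly int} := 'X^(ex n j) * qb n.*2 j.

Lemma coefF (p : {poly {poly int}}) i j :
  (p * Fx i)`_j = p`_j * Ai i + (if j is j'.+1 then p`_j' * (1 + Ai i ^+ 2) else 0)
     + (if j is j'.+2 then p`_j' * Ai i else 0).
Proof.
rewrite /Fx !mulrDr !coefD !mulrA !coefMX !coefMC.
by case: j => [|[|j]] //=; rewrite ?addr0 ?coefMC.
Qed.

Lemma e_test n j : (j <= n.*2)%N -> (ex n j.+1 + (n.*2 - j) * 2 = ex n j + n.*2.+1)%N.
Proof. rewrite /ex. nia. Qed.

Lemma gS n : gp n.+1 = gp n * Fx n.
Proof. by rewrite /gp big_ord_recr. Qed.

Lemma AiX i : Ai i ^+ 2 = 'X^(i.*2.+1 * 2).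
Proof. by rewrite /Ai -exprM. Qed.

Lemma coef_gp n j : (gp n)`_j = cf n j.
Proof.
elim: n j => [|n IH] j.
  rewrite /gp big_ord0 coef1 /cf /ex /=.
  case: j => [|j] /=; last by rewrite mulr0.
  by rewrite mulr1 [X in 'X^X](_ : _ = 0%N) // expr0.
rewrite gS coefF.
case: j => [|[|j]] /=; rewrite !IH ?AiX /cf /Ai doubleS.
- rewrite !qb0 addr0 addr0 !mulr1 -exprD; congr ('X^_); rewrite /ex; nia.
- rewrite rule3' !qb0.
  have -> : ex n.+1 1 = ex n 0 by rewrite /ex; nia.
  have hab : ('X^(ex n 0) : {poly int}) * 'X^2 = 'X^(ex n 1) * 'X^(n.*2.+1) by rewrite -!exprD; congr ('X^_); rewrite /ex; nia.
  rewrite [in RHS]mulrDr [in RHS]mulrA hab; ring.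
- rewrite rule3.
  have -> : ex n.+1 j.+2 = ex n j.+1 by rewrite /ex; nia.
  have h2 : ('X^(ex n j.+1) : {poly int}) * 'X^(j.+2 * 2) = 'X^(ex n j.+2) * 'X^(n.*2.+1) by rewrite -!exprD; congr ('X^_); rewrite /ex; nia.
  rewrite !mulrDr [_ * ('X^(j.+2 * 2) * _)]mulrA h2.
  case: (leqP j n.*2) => hj.
    have h0 : ('X^(ex n j.+1) : {poly int}) * 'X^((n.*2 - j) * 2) = 'X^(ex n j) * 'X^(n.*2.+1) by rewrite -!exprD; congr ('X^_); rewrite /ex; nia.
    rewrite [_ * ('X^((n.*2 - j) * 2) * _)]mulrA h0; ring.
  rewrite (qb_gt (m := n.*2) (k := j)) //; ring.
Qed.

Lemma Fx_eval (a : {poly int}) : (a%:P + (1 + a ^+ 2)%:P * 'X + a%:P * 'X^2).[-1] = - (1 - a) ^+ 2.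
Proof.
have h : forall b : {poly int}, b + (1 + b^+2) * -1 + b * ((-1) ^+ 2) = -(1-b)^+2 by move=> b; ring.
rewrite !hornerD !hornerCM hornerC hornerX hornerXn; exact: h. Qed.

Lemma g_eval n : (gp n).[-1] = \prod_(i < n) (- (1 - Ai i) ^+ 2).
Proof.
rewrite /gp horner_prod; apply: eq_bigr => i _.
exact: Fx_eval.
Qed.

Lemma g_sum n : (gp n).[-1] = \sum_(j < n.*2.+1) cf n j * (-1) ^+ j.
Proof.
rewrite (@horner_coef_wide _ n.*2.+1); last first.
  apply/leq_sizeP => j hj; rewrite coef_gp /cf qb_gt ?mulr0 //.
by apply: eq_bigr => j _; rewrite coef_gp.
Qed.

Definition oddP N : {poly int} := \prod_(i < N) (1 - Ai i).

Lemma g_eval_even n : (gp n.*2).[-1] = oddP n.*2 ^+ 2.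
Proof.
rewrite g_eval /oddP prodrN card_ord -signr_odd odd_double expr0 mul1r.
by rewrite prodrXl.
Qed.

Lemma oddP_pc N : oddP N * poch_trunc 2 N = poch_trunc 1 N.*2.
Proof.
elim: N => [|N IH]; first by rewrite /oddP big_ord0 pc0 mul1r pc0.
rewrite /oddP big_ord_recr /= -/(oddP N) pcS doubleS pcS pcS -IH /Ai.
rewrite !muln1.
have -> : (N.+1 * 2 = N.*2.+2)%N by lia.
set u := ('X^(N.*2.+1) : {poly int}); set v := ('X^(N.*2.+2) : {poly int}).
ring.
Qed.

Lemma eqm_eq n p q p' q' : p = p' -> q = q' -> eqm n p q -> eqm n p' q'.
Proof. by move=> -> ->. Qed.
Lemma eqmM1 n p q : eqm n q 1 -> eqm n (p * q) p.
Proof. by move=> h; rewrite -[X in eqm _ _ X]mulr1; apply: eqm_mul. Qed.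

Lemma qb_lim n m k : (n <= k)%N -> (n <= m - k)%N -> (k <= m)%N ->
  eqm n (qb m k) (inv_poch_trunc 2 n).
Proof.
move=> h1 h2 h3.
set P := poch_trunc 2 n; set I := inv_poch_trunc 2 n.
have hIP : eqm n (I * P) 1 := inv_poch_ok (n:=n) (isT : (0 < 2)%N).
have hk : eqm n (poch_trunc 2 k) P := poch_stable (isT : (0 < 2)%N) h1.
have hmk : eqm n (poch_trunc 2 (m - k)) P := poch_stable (isT : (0 < 2)%N) h2.
have hm : eqm n (poch_trunc 2 m) P := poch_stable (isT : (0 < 2)%N) (leq_trans h1 h3).
have A1 : eqm n (qb m k * poch_trunc 2 k * poch_trunc 2 (m - k) * (I * I)) (qb m k * P * P * (I * I)).
  by apply: eqm_mul => //; apply: eqm_mul => //; apply: eqm_mul.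
rewrite qb_prod // in A1.
have A2 : eqm n (qb m k * P * P * (I * I)) (qb m k).
  apply: (eqm_eq (p := qb m k * ((I * P) * (I * P)))) => //; first by ring.
  by apply: eqmM1; apply: (eqm_eq (p := (I*P)*(I*P)) (q := 1 * 1)) => //; [rewrite mulr1|apply: eqm_mul].
have A3 : eqm n (poch_trunc 2 m * (I * I)) I.
  apply: (eqm_trans (q := P * (I * I))); first by apply: eqm_mul.
  apply: (eqm_eq (p := I * (I * P))) => //; first by ring.
  exact: eqmM1.
exact: eqm_trans (eqm_sym A2) (eqm_trans (eqm_sym A1) A3).
Qed.

Definition Gs n : {poly int} := \sum_(j < (n.*2).*2.+1) (-1)^+j * 'X^(ex n.*2 j).

Lemma sum_lim n : eqm n (\sum_(j < (n.*2).*2.+1) cf n.*2 j * (-1)^+j) (Gs n * inv_poch_trunc 2 n).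
Proof.
rewrite /Gs mulr_suml; apply: eqm_sum => j _; rewrite /cf.
case: (leqP (ex n.*2 j) n) => h.
  have hj : (n <= j /\ n <= (n.*2).*2 - j /\ j <= (n.*2).*2)%N by move: h; rewrite /ex; nia.
  case: hj => [hj1 [hj2 hj3]].
  apply: (eqm_eq (p := 'X^(ex n.*2 j) * (-1)^+j * qb (n.*2).*2 j) (q := 'X^(ex n.*2 j) * (-1)^+j * inv_poch_trunc 2 n)); try ring.
  by apply: eqm_mul => //; apply: qb_lim.
apply: (eqm_trans (q := 0)).
  by rewrite -mulrA; apply: eqm_Xn.
by apply: eqm_sym; rewrite (mulrC ((-1)^+j)) -mulrA; apply: eqm_Xn.
Qed.

Lemma main_red n : eqm n (poch_trunc 1 n ^+ 4 * inv_poch_trunc 2 n ^+ 2 * inv_poch_trunc 4 n)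
  (Gs n ^+ 2 * inv_poch_trunc 4 n).
Proof.
set P1 := poch_trunc 1 n; set P2 := poch_trunc 2 n; set I2 := inv_poch_trunc 2 n.
set I4 := inv_poch_trunc 4 n.
have hIP : eqm n (I2 * P2) 1 := inv_poch_ok (n:=n) (isT : (0 < 2)%N).
have hPI : eqm n (P2 * I2) 1 by rewrite mulrC.
have F2 : eqm n (oddP n.*2 ^+ 2) (Gs n * I2).
  by rewrite -g_eval_even g_sum; apply: sum_lim.
have F3 : eqm n (oddP n.*2) (P1 * I2).
  apply: (eqm_trans (q := oddP n.*2 * (poch_trunc 2 n.*2 * I2))).
    apply: eqm_sym; apply: eqmM1.
    apply: (eqm_trans (q := P2 * I2)) => //; apply: eqm_mul => //.
    by apply: poch_stable => //; rewrite -addnn leq_addr.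
  rewrite mulrA oddP_pc; apply: eqm_mul => //.
  by apply: poch_stable => //; rewrite -!addnn; lia.
have F4 : eqm n (P1 ^+ 2 * I2 ^+ 2) (Gs n * I2).
  apply: eqm_trans F2; apply: eqm_sym.
  by apply: (eqm_eq (p := oddP n.*2 * oddP n.*2) (q := (P1 * I2) * (P1 * I2))); [ring|ring|apply: eqm_mul].
have F5 : eqm n (P1 ^+ 2) (Gs n * P2).
  apply: (eqm_trans (q := (P1 ^+ 2 * I2 ^+ 2) * (P2 * P2))).
    apply: eqm_sym; apply: (eqm_eq (p := P1 ^+ 2 * ((I2 * P2) * (I2 * P2))) (q := P1 ^+ 2)); [ring|done|].
    by apply: eqmM1; apply: (eqm_eq (p := (I2 * P2) * (I2 * P2)) (q := 1 * 1)) => //; [rewrite mulr1|apply: eqm_mul].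
  apply: (eqm_trans (q := (Gs n * I2) * (P2 * P2))); first by apply: eqm_mul.
  apply: (eqm_eq (p := Gs n * P2 * (I2 * P2)) (q := Gs n * P2)); [ring|done|].
  exact: eqmM1.
apply: (eqm_trans (q := (Gs n * P2) * (Gs n * P2) * I2 ^+ 2 * I4)).
  apply: (eqm_eq (p := P1 ^+ 2 * P1 ^+ 2 * I2 ^+ 2 * I4) (q := (Gs n * P2) * (Gs n * P2) * I2 ^+ 2 * I4)); [ring|done|].
  by apply: eqm_mul => //; apply: eqm_mul => //; apply: eqm_mul.
apply: (eqm_eq (p := Gs n ^+ 2 * I4 * ((P2 * I2) * (P2 * I2))) (q := Gs n ^+ 2 * I4)); [ring|done|].
by apply: eqmM1; apply: (eqm_eq (p := (P2 * I2) * (P2 * I2)) (q := 1 * 1)) => //; [rewrite mulr1|apply: eqm_mul].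
Qed.

Definition sig (p : {poly int}) : {poly int} := p \Po (- 'X).

Lemma coef_sig p i : (sig p)`_i = (-1) ^+ i * p`_i.
Proof.
rewrite /sig; elim/poly_ind: p i => [|q c IH] i; first by rewrite comp_poly0 !coef0 mulr0.
rewrite comp_poly_MXaddC !coefD !coefC mulrN coefN coefMX coefMX.
case: i => [|i] /=; first by rewrite oppr0 add0r expr0 mul1r.
by rewrite IH addr0 exprS; ring.
Qed.

Lemma sigM p q : sig (p * q) = sig p * sig q.
Proof. exact: comp_polyM. Qed.

Lemma sigXn k : sig 'X^k = (-1) ^+ k * 'X^k.
Proof. rewrite /sig rmorphXn; change ((('X : {poly int}) \Po (- 'X))^+k = (-1) ^+ k * 'X^k); rewrite comp_polyX; exact: exprNn. Qed.

Lemma coef_transfer (p : {poly int}) n : p`_n = (-1) ^+ n * (sig p)`_n.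
Proof. by rewrite coef_sig mulrA -exprD -signr_odd addnn odd_double expr0 mul1r. Qed.

Lemma sig_sum (I : Type) (r : seq I) (P : pred I) (F : I -> {poly int}) :
  sig (\sum_(i <- r | P i) F i) = \sum_(i <- r | P i) sig (F i).
Proof. exact: rmorph_sum. Qed.
Lemma sig_prod (I : Type) (r : seq I) (P : pred I) (F : I -> {poly int}) :
  sig (\prod_(i <- r | P i) F i) = \prod_(i <- r | P i) sig (F i).
Proof. exact: rmorph_prod. Qed.
Lemma sig_sign j : sig ((-1) ^+ j) = (-1) ^+ j.
Proof. by rewrite /sig rmorphXn rmorphN1. Qed.

Lemma odd_ex N j : odd N = false -> odd (ex N j) = odd j.
Proof.
move=> hN; rewrite /ex; case: (leqP N j) => h.
  have -> : (N - j = 0)%N by lia.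
  by rewrite muln0 addn0 oddM andbb oddB // hN addbF.
have -> : (j - N = 0)%N by lia.
by rewrite add0n oddM andbb oddB ?hN //; lia.
Qed.

Definition S n : {poly int} := \sum_(j < (n.*2).*2.+1) 'X^(ex n.*2 j).

Lemma sig_Gs n : sig (Gs n) = S n.
Proof.
rewrite /Gs sig_sum; apply: eq_bigr => j _.
rewrite sigM sig_sign sigXn mulrA -exprD -signr_odd oddD odd_ex ?odd_double //.
by rewrite addbb expr0 mul1r.
Qed.

Lemma sig_I4 n : sig (inv_poch_trunc 4 n) = inv_poch_trunc 4 n.
Proof.
rewrite /inv_poch_trunc sig_prod; apply: eq_bigr => k _.
rewrite sig_sum; apply: eq_bigr => i _.
rewrite sigXn -signr_odd !oddM /= andbF expr0 mul1r //.
Qed.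

Definition nng (p : {poly int}) := forall i, 0 <= p`_i.

Lemma nng_mul p q : nng p -> nng q -> nng (p * q).
Proof. by move=> hp hq i; rewrite coefM; apply: sumr_ge0 => j _; apply: mulr_ge0. Qed.
Lemma nng_Xn k : nng 'X^k.
Proof. by move=> i; rewrite coefXn ler0n. Qed.
Lemma nng_sumX (I : Type) (r : seq I) (f : I -> nat) : nng (\sum_(i <- r) 'X^(f i)).
Proof. by move=> k; rewrite coef_sum; apply: sumr_ge0 => i _; apply: nng_Xn. Qed.

Lemma ge1M (a b : int) : 1 <= a -> 1 <= b -> 1 <= a * b.
Proof. move=> ha hb; nra. Qed.

Lemma coef_lb p q a b : nng p -> nng q -> p`_a * q`_b <= (p * q)`_(a + b).
Proof.
move=> hp hq; rewrite coefM.
have ha : (a < (a + b).+1)%N by lia.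
rewrite (bigD1 (Ordinal ha)) //= addKn lerDl.
by apply: sumr_ge0 => j _; apply: mulr_ge0.
Qed.

Lemma sumX_ge (I : eqType) (r : seq I) (f : I -> nat) k j0 :
  j0 \in r -> f j0 = k -> 1 <= (\sum_(i <- r) ('X^(f i) : {poly int}))`_k.
Proof.
move=> hj hk; rewrite coef_sum (big_rem j0) //= coefXn hk eqxx lerDl.
by apply: sumr_ge0 => i _; apply: nng_Xn.
Qed.

Lemma S0 n : 1 <= (S n)`_0.
Proof.
have h : (n.*2 < (n.*2).*2.+1)%N by lia.
apply: (sumX_ge (j0 := Ordinal h)); first by rewrite mem_index_enum.
by rewrite /ex /= subnn.
Qed.
Lemma S1 n : (0 < n)%N -> 1 <= (S n)`_1.
Proof.
move=> n0; have h : (n.*2.+1 < (n.*2).*2.+1)%N by lia.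
apply: (sumX_ge (j0 := Ordinal h)); first by rewrite mem_index_enum.
rewrite /ex /=; have -> : (n.*2 - n.*2.+1 = 0)%N by lia.
by have -> : (n.*2.+1 - n.*2 = 1)%N by lia.
Qed.
Lemma nngS n : nng (S n).
Proof. exact: nng_sumX. Qed.

Lemma nngI4 n : nng (inv_poch_trunc 4 n).
Proof.
rewrite /inv_poch_trunc; elim/big_rec: _ => [|k p _ hp]; first by move=> i; rewrite coef1 ler0n.
by apply: nng_mul => //; apply: nng_sumX.
Qed.

Lemma I4_ge n m : (m <= n)%N -> 1 <= (inv_poch_trunc 4 n)`_(m * 4).
Proof.
move=> hm; case: n hm => [|n] hm.
  have -> : m = 0%N by lia.
  by rewrite /inv_poch_trunc big_geq // coef1.
rewrite /inv_poch_trunc big_ltn // -[(m * 4)%N]addn0.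
apply: le_trans (coef_lb _ _ _ _); last first.
- elim/big_rec: _ => [|k p _ hp]; first by move=> i; rewrite coef1 ler0n.
  by apply: nng_mul => //; apply: nng_sumX.
- exact: nng_sumX.
apply: ge1M.
  by apply: (sumX_ge (j0 := m)); [rewrite mem_index_iota; lia | lia].
have : nng (\prod_(2 <= i < n.+2) \sum_(0 <= i0 < n.+2) ('X^(i0 * i * 4) : {poly int})) /\
       1 <= (\prod_(2 <= i < n.+2) \sum_(0 <= i0 < n.+2) ('X^(i0 * i * 4) : {poly int}))`_0.
  apply: (big_ind (fun p : {poly int} => nng p /\ 1 <= p`_0)).
  - by split; [move=> i; rewrite coef1 ler0n | rewrite coef1].
  - move=> x y [hx1 hx2] [hy1 hy2]; split; first exact: nng_mul.
    by rewrite coef0M; apply: ge1M.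
  - move=> k _; split; first exact: nng_sumX.
    by apply: (sumX_ge (j0 := 0%N)); [rewrite mem_index_iota | rewrite !mul0n].
by case.
Qed.

Lemma coefM0 (p q : {poly int}) i :
  (forall j, (j <= i)%N -> p`_j = 0 \/ q`_(i - j) = 0) -> (p * q)`_i = 0.
Proof.
move=> h; rewrite coefM big1 // => j _.
have [->|->] := h j (ltn_ord j : (j < i.+1)%N); by rewrite ?mul0r ?mulr0.
Qed.

Definition P4 (p : {poly int}) := forall i, (i %% 4 != 0)%N -> p`_i = 0.

Lemma P4_I4 n : P4 (inv_poch_trunc 4 n).
Proof.
rewrite /inv_poch_trunc; elim/big_rec: _ => [|k p _ hp] i hi.
  by rewrite coef1; case: i hi.
apply: coefM0 => j hj.
case: (eqVneq (j %% 4) 0)%N => hj4; last first.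
  left; rewrite coef_sum big1 // => l _; rewrite coefXn.
  by case: eqP => // e; move: hj4; rewrite e; lia.
right; apply: hp; apply/negP => /eqP h4; move/eqP: hi; apply.
by move/eqP: hj4 => hj4; lia.
Qed.

Lemma sq_mod4 x : ((x * x) %% 4 < 2)%N.
Proof.
rewrite -modnMm; move: (x %% 4)%N (@ltn_pmod x 4 isT) => r.
by case: r => [|[|[|[|r]]]].
Qed.

Lemma ex_mod4 N j : (ex N j %% 4 < 2)%N.
Proof.
rewrite /ex; case: (leqP N j) => h.
  have -> : (N - j = 0)%N by lia.
  by rewrite addn0; apply: sq_mod4.
have -> : (j - N = 0)%N by lia.
by rewrite add0n; apply: sq_mod4.
Qed.

Lemma S_supp n a : (2 <= a %% 4)%N -> (S n)`_a = 0.
Proof.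
move=> ha; rewrite /S coef_sum big1 // => j _; rewrite coefXn.
case: eqP => // e; have := ex_mod4 n.*2 j; rewrite -e; lia.
Qed.

Lemma odd_mod4 n : odd n = odd (n %% 4).
Proof. by rewrite {1}(divn_eq n 4) oddD oddM /= andbF. Qed.

Theorem theorem1p3 : forall n : nat,
  (((n %% 4 = 0)%N \/ (n %% 4 = 2)%N) -> 0 < a_coef n) /\
  ((n %% 4 = 1)%N -> a_coef n < 0) /\
  ((n %% 4 = 3)%N -> a_coef n = 0).
Proof.
move=> n.
have red : a_coef n = (-1) ^+ n * (S n * S n * inv_poch_trunc 4 n)`_n.
  rewrite /a_coef main_red // coef_transfer sigM expr2 sigM sig_Gs sig_I4 //.
set T := (S n * S n * inv_poch_trunc 4 n)`_n.
have Tge : (n %% 4 != 3)%N -> 1 <= T.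
  move=> h3.
  have -> : T = (S n * S n * inv_poch_trunc 4 n)`_(n %% 4 + n %/ 4 * 4) by rewrite /T addnC -divn_eq.
  apply: (le_trans _ (coef_lb _ _ _ _)); [| apply: nng_mul; apply: nngS | apply: nngI4].
  apply: ge1M; last by apply: I4_ge; apply: leq_div.
  have : (n %% 4 < 4)%N by apply: ltn_pmod.
  case E: (n %% 4)%N => [|[|[|[|r]]]] // _.
  - by rewrite -[0%N]/(0 + 0)%N; apply: (le_trans _ (coef_lb _ _ _ _)); [apply: ge1M; apply: S0|apply: nngS|apply: nngS].
  - have n0 : (0 < n)%N by case: n E {red T h3} => //.
    by rewrite -[1%N]/(1 + 0)%N; apply: (le_trans _ (coef_lb _ _ _ _)); [apply: ge1M; [apply: S1|apply: S0]|apply: nngS|apply: nngS].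
  - have n0 : (0 < n)%N by case: n E {red T h3} => //.
    by rewrite -[2%N]/(1 + 1)%N; apply: (le_trans _ (coef_lb _ _ _ _)); [apply: ge1M; apply: S1|apply: nngS|apply: nngS].
  - by rewrite E in h3.
split; [|split].
- move=> h; rewrite red -signr_odd odd_mod4.
  have -> : odd (n %% 4) = false by case: h => ->.
  rewrite expr0 mul1r; apply: lt_le_trans (Tge _); first by [].
  by case: h => ->.
- move=> h; rewrite red -signr_odd odd_mod4 h expr1 mulN1r oppr_lt0.
  by apply: lt_le_trans (Tge _); rewrite ?h.
- move=> h; rewrite red /T.
  suff -> : (S n * S n * inv_poch_trunc 4 n)`_n = 0 by rewrite mulr0.
  apply: coefM0 => j hj.
  case: (eqVneq ((n - j) %% 4) 0)%N => h4; last by right; apply: P4_I4.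
  left; apply: coefM0 => a ha.
  case: (leqP 2 (a %% 4)) => h1; first by left; apply: S_supp.
  case: (leqP 2 ((j - a) %% 4)) => h2; first by right; apply: S_supp.
  move/eqP: h4 => h4; exfalso; lia.
Qed.
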